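(* Let $A\in\mathbb{R}^{M\times N}$ with $M\ge N$, let $\tau\ge 0$, and let $B=\begin{bmatrix}-\tau I_M & A\\ A^T & -\tau I_N\end{bmatrix}$. Let $\widetilde U\in\mathbb{R}^{M\times k}$, $\widetilde V\in\mathbb{R}^{N\times k}$ have orthonormal columns, let $(\theta_1,c_1,d_1)$ be a singular triplet of $H=\widetilde U^TA\widetilde V$ with $\theta_1$ closest to $\tau$ among the singular values of $H$, set $\tilde u_1=\widetilde Uc_1$, $\tilde v_1=\widetilde Vd_1$, and $r=\begin{bmatrix}A\tilde v_1-\theta_1\tilde u_1\\ A^T\tilde u_1-\theta_1\tilde v_1\end{bmatrix}$. Let $\widetilde P_1\in\mathbb{R}^{M\times(M-1)}$ and $\widetilde Q_1\in\mathbb{R}^{N\times(N-1)}$ be such that $[\tilde u_1,\widetilde P_1]$ and $[\tilde v_1,\widetilde Q_1]$ are orthogonal, and set $\widetilde W_1=\begin{bmatrix}\widetilde P_1&0\\0&\widetilde Q_1\end{bmatrix}$, $$\widetilde B_1'=\widetilde W_1^TB\widetilde W_1=\begin{bmatrix}-\tau I_{M-1}&\widetilde P_1^TA\widetilde Q_1\\ \widetilde Q_1^TA^T\widetilde P_1&-\tau I_{N-1}\end{bmatrix},\qquad \widetilde B_1=\widetilde W_1\widetilde B_1'\widetilde W_1^T .$$ Consider the correction equation $$\begin{bmatrix}I-\tilde u_1\tilde u_1^T&0\\0&I-\tilde v_1\tilde v_1^T\end{bmatrix}B\begin{bmatrix}I-\tilde u_1\tilde u_1^T&0\\0&I-\tilde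 v_1\tilde v_1^T\end{bmatrix}w=-r,\qquad\text{i.e. } \widetilde B_1w=-r,$$ for $w=(s^T,t^T)^T$ with $s\perp\tilde u_1$, $t\perp\tilde v_1$. Then its solution is $w=\widetilde W_1z$, where $z\in\mathbb{R}^{M+N-2}$ solves $\widetilde B_1'z=-r'$ with $r'=\widetilde W_1^Tr$. Moreover, if MINRES is applied to $\widetilde B_1w=-r$ and to $\widetilde B_1'z=-r'$ with initial guesses $\tilde w_0$ and $\tilde z_0$ satisfying $\tilde w_0=\widetilde W_1\tilde z_0$, then the $j$th iterates satisfy $\tilde w_j=\widetilde W_1\tilde z_j$ for $j=1,2,\dots,M+N-2$, and, writing $r_{\mathrm{in},j}=\widetilde B_1\tilde w_j+r$ and $r'_{\mathrm{in},j}=\widetilde B_1'\tilde z_j+r'$, one has $\|r_{\mathrm{in},j}\|=\|r'_{\mathrm{in},j}\|$ for $j=0,1,\dots,M+N-2$.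
   Context: $\|\cdot\|$ is the Euclidean vector norm / spectral matrix norm. MINRES applied to a symmetric system $Cx=-b$ with initial guess $x_0$ produces, at step $j$, the iterate $x_j\in x_0+\mathcal{K}_j(C,Cx_0+b)$ minimizing $\|Cx+b\|$ over that affine space, where $\mathcal{K}_j(C,y)=\mathrm{span}\{y,Cy,\dots,C^{j-1}y\}$. By construction, $r$ satisfies $r_{1:M}\perp\tilde u_1$ and $r_{M+1:M+N}\perp\tilde v_1$. *)

(* Defs.v *)
From HB Require Import structures.
From mathcomp Require Import all_boot all_order all_algebra.
Set Implicit Arguments. Unset Strict Implicit. Unset Printing Implicit Defensive.
Import Order.TTheory GRing.Theory Num.Theory.
Local Open Scope ring_scope.

Definition vnorm (R : rcfType) (n : nat) (x : 'cV[R]_n) : R :=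
  Num.sqrt (\sum_(i < n) x i 0 ^+ 2).

Definition in_krylov (R : rcfType) (n : nat) (C : 'M[R]_n) (y : 'cV[R]_n)
  (j : nat) (v : 'cV[R]_n) : Prop :=
  exists a : 'I_j -> R, v = \sum_(i < j) a i *: iter i (mulmx C) y.

(* x is a (the) j-th MINRES iterate for C x = - b with initial guess x0:
   x in x0 + K_j(C, C x0 + b) minimizing ||C x + b|| over that affine space. *)
Definition minres_iterate (R : rcfType) (n : nat) (C : 'M[R]_n) (b x0 : 'cV[R]_n)
  (j : nat) (x : 'cV[R]_n) : Prop :=
  in_krylov C (C *m x0 + b) j (x - x0) /\
  forall x', in_krylov C (C *m x0 + b) j (x' - x0) ->
    vnorm (C *m x + b) <= vnorm (C *m x' + b).

Definition singular_triplet (R : rcfType) (p q : nat) (H : 'M[R]_(p, q))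
  (sigma : R) (c : 'cV[R]_p) (d : 'cV[R]_q) : Prop :=
  [/\ 0 <= sigma, c^T *m c = 1%:M, d^T *m d = 1%:M,
      H *m d = sigma *: c & H^T *m c = sigma *: d].

Definition is_singular_value (R : rcfType) (p q : nat) (H : 'M[R]_(p, q)) (sigma : R) :=
  exists c d, singular_triplet H sigma c d.

Definition Bmat (R : rcfType) (M N : nat) (A : 'M[R]_(M, N)) (tau : R) : 'M[R]_(M + N) :=
  block_mx (- tau%:M) A A^T (- tau%:M).

Definition Wmat (R : rcfType) (M N M' N' : nat) (P : 'M[R]_(M, M')) (Q : 'M[R]_(N, N'))
  : 'M[R]_(M + N, M' + N') := block_mx P 0 0 Q.

Definition resid (R : rcfType) (M N : nat) (A : 'M[R]_(M, N)) (theta : R)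
  (u : 'cV[R]_M) (v : 'cV[R]_N) : 'cV[R]_(M + N) :=
  col_mx (A *m v - theta *: u) (A^T *m u - theta *: v).

Definition Proj (R : rcfType) (M N : nat) (u : 'cV[R]_M) (v : 'cV[R]_N) : 'M[R]_(M + N) :=
  block_mx (1%:M - u *m u^T) 0 0 (1%:M - v *m v^T).

(* Main.v *)
Require Import Defs.
From HB Require Import structures.
From mathcomp Require Import all_boot all_order all_algebra.
Import Order.TTheory GRing.Theory Num.Theory.
Local Open Scope ring_scope.

Lemma orth_split (R : rcfType) (p : nat) (u : 'cV[R]_p.+1) (P : 'M[R]_(p.+1, p)) :
  (row_mx u P)^T *m row_mx u P = 1%:M ->
  [/\ u^T *m u = 1%:M, P^T *m u = 0, u^T *m P = 0, P^T *m P = 1%:M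
    & u *m u^T + P *m P^T = 1%:M].
Proof.
move=> h.
have h2 := h.
rewrite tr_row_mx mul_col_row (scalar_mx_block 1 p (1:R)) in h2.
have [h11 h12 h21 h22] := eq_block_mx h2.
split => //.
have h3 : row_mx u P *m (row_mx u P)^T = 1%:M.
  exact: (@mulmx1C _ p.+1 (row_mx u P)^T (row_mx u P)).
by rewrite tr_row_mx mul_row_col in h3.
Qed.

Lemma vnormE (R : rcfType) (p : nat) (x : 'cV[R]_p) :
  vnorm x = Num.sqrt ((x^T *m x) 0 0).
Proof.
rewrite /vnorm mxE; congr Num.sqrt; apply: eq_bigr => i _.
by rewrite !mxE expr2.
Qed.

Lemma vnormW (R : rcfType) (p q : nat) (W : 'M[R]_(p, q)) (y : 'cV[R]_q) :
  W^T *m W = 1%:M -> vnorm (W *m y) = vnorm y.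
Proof.
move=> h; rewrite !vnormE trmx_mul mulmxA -(mulmxA y^T) h mulmx1 //.
Qed.

Lemma iterW (R : rcfType) (p q : nat) (W : 'M[R]_(p, q)) (C : 'M[R]_p) (C' : 'M[R]_q)
  (y : 'cV[R]_q) i :
  C *m W = W *m C' -> iter i (mulmx C) (W *m y) = W *m iter i (mulmx C') y.
Proof.
move=> h; elim: i => [|i IH] //=.
by rewrite IH mulmxA h mulmxA.
Qed.

Lemma krylov1 (R : rcfType) (p q : nat) (W : 'M[R]_(p, q)) (C : 'M[R]_p) (C' : 'M[R]_q)
  (y v : 'cV[R]_q) j :
  C *m W = W *m C' -> in_krylov C' y j v -> in_krylov C (W *m y) j (W *m v).
Proof.
move=> h [a ->]; exists a.
rewrite mulmx_sumr; apply: eq_bigr => i _.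
by rewrite (@iterW _ _ _ W C C' y i h) scalemxAr.
Qed.

Lemma krylov2 (R : rcfType) (p q : nat) (W : 'M[R]_(p, q)) (C : 'M[R]_p) (C' : 'M[R]_q)
  (y : 'cV[R]_q) (x : 'cV[R]_p) j :
  C *m W = W *m C' -> in_krylov C (W *m y) j x ->
  exists v, x = W *m v /\ in_krylov C' y j v.
Proof.
move=> h [a ->]; exists (\sum_(i < j) a i *: iter i (mulmx C') y); split.
  rewrite mulmx_sumr; apply: eq_bigr => i _.
  by rewrite (@iterW _ _ _ W C C' y i h) scalemxAr.
by exists a.
Qed.

Lemma resW (R : rcfType) (p q : nat) (W : 'M[R]_(p, q)) (C : 'M[R]_p) (C' : 'M[R]_q)
  (b : 'cV[R]_p) (b' : 'cV[R]_q) (z : 'cV[R]_q) :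
  C *m W = W *m C' -> b = W *m b' -> C *m (W *m z) + b = W *m (C' *m z + b').
Proof. by move=> h ->; rewrite mulmxA h -mulmxA mulmxDr. Qed.
Arguments resW {R p q W C C' b b'} z.
Arguments krylov1 {R p q W C C' y v j}.
Arguments krylov2 {R p q W C C' y x j}.


Lemma minres_fwd (R : rcfType) (p q : nat) (W : 'M[R]_(p, q)) (C : 'M[R]_p) (C' : 'M[R]_q)
  (b : 'cV[R]_p) (b' : 'cV[R]_q) (z0 z : 'cV[R]_q) j :
  W^T *m W = 1%:M -> C *m W = W *m C' -> b = W *m b' ->
  minres_iterate C' b' z0 j z -> minres_iterate C b (W *m z0) j (W *m z).
Proof.
move=> hW h hb [hk hmin]; rewrite /minres_iterate (resW _ h hb).
split; first by rewrite -mulmxBr; exact: krylov1 h hk.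
move=> x' /(krylov2 h) [v [hx hv]].
have -> : x' = W *m (z0 + v) by rewrite mulmxDr -hx addrC subrK.
rewrite !(resW _ h hb) !vnormW //; apply: hmin.
by rewrite [z0 + v]addrC addrK.
Qed.

Lemma minres_bwd (R : rcfType) (p q : nat) (W : 'M[R]_(p, q)) (C : 'M[R]_p) (C' : 'M[R]_q)
  (b : 'cV[R]_p) (b' : 'cV[R]_q) (z0 : 'cV[R]_q) (w : 'cV[R]_p) j :
  W^T *m W = 1%:M -> C *m W = W *m C' -> b = W *m b' ->
  minres_iterate C b (W *m z0) j w -> exists z, minres_iterate C' b' z0 j z /\ w = W *m z.
Proof.
move=> hW h hb [hk hmin]; move: hk; rewrite (resW _ h hb) => /(krylov2 h) [v [hx hv]].
have ew : w = W *m (z0 + v) by rewrite mulmxDr -hx addrC subrK.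
exists (z0 + v); split => //; split; first by rewrite [z0 + v]addrC addrK.
move=> z' hz'.
have := hmin (W *m z'); rewrite ew !(resW _ h hb) !vnormW //; apply.
by rewrite -mulmxBr; exact: krylov1 h hz'.
Qed.

Arguments minres_fwd {R p q W C C' b b' z0 z j}.
Arguments minres_bwd {R p q W C C' b b' z0 w j}.

Lemma minres_eq (R : rcfType) (p q : nat) (W : 'M[R]_(p, q)) (C : 'M[R]_p) (C' : 'M[R]_q)
  (b : 'cV[R]_p) (b' : 'cV[R]_q) (z0 z : 'cV[R]_q) (w : 'cV[R]_p) j :
  W^T *m W = 1%:M -> C *m W = W *m C' -> b = W *m b' ->
  minres_iterate C b (W *m z0) j w -> minres_iterate C' b' z0 j z ->
  vnorm (C *m w + b) = vnorm (C' *m z + b').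
Proof.
move=> hW h hb hw hz.
have [z1 [hz1 ew]] := minres_bwd hW h hb hw.
have hz2 := minres_fwd hW h hb hz.
apply/le_anti/andP; split.
  rewrite -(@vnormW _ _ _ W (C' *m z + b') hW) -(resW _ h hb).
  by case: hw => _; apply; case: hz2.
rewrite ew (resW _ h hb) vnormW //.
by case: hz => _; apply; case: hz1.
Qed.

Arguments orth_split {R p u P}.
Lemma perp_fix (R : rcfType) (p : nat) (u : 'cV[R]_p) (x : 'cV[R]_p) :
  u^T *m x = 0 -> (1%:M - u *m u^T) *m x = x.
Proof. by move=> h; rewrite mulmxBl mul1mx -mulmxA h mulmx0 subr0. Qed.

Lemma perp_T (R : rcfType) (p : nat) (u : 'cV[R]_p) (x : 'cV[R]_p) :
  x^T *m u = 0 -> u^T *m x = 0.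
Proof. by move=> h; rewrite -[x]trmxK -trmx_mul h trmx0. Qed.

Theorem theorem3p1 (R : rcfType) (m n k : nat) (hMN : (n <= m)%N)
  (A : 'M[R]_(m.+1, n.+1)) (tau : R) (htau : 0 <= tau)
  (U : 'M[R]_(m.+1, k)) (V : 'M[R]_(n.+1, k))
  (hU : U^T *m U = 1%:M) (hV : V^T *m V = 1%:M)
  (theta : R) (c d : 'cV[R]_k)
  (htrip : singular_triplet (U^T *m A *m V) theta c d)
  (hclosest : forall sigma, is_singular_value (U^T *m A *m V) sigma ->
                `|theta - tau| <= `|sigma - tau|)
  (P1 : 'M[R]_(m.+1, m)) (Q1 : 'M[R]_(n.+1, n))
  (hP1 : (row_mx (U *m c) P1)^T *m row_mx (U *m c) P1 = 1%:M)
  (hQ1 : (row_mx (V *m d) Q1)^T *m row_mx (V *m d) Q1 = 1%:M) :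
  let u1 := U *m c in
  let v1 := V *m d in
  let B := Bmat A tau in
  let W := Wmat P1 Q1 in
  let B1' := W^T *m B *m W in
  let B1 := W *m B1' *m W^T in
  let r := resid A theta u1 v1 in
  let r' := W^T *m r in
  let Pi := Proj u1 v1 in
  [/\ Pi *m B *m Pi = B1,
      (forall (s : 'cV[R]_m.+1) (t : 'cV[R]_n.+1),
         s^T *m u1 = 0 -> t^T *m v1 = 0 ->
         Pi *m B *m Pi *m col_mx s t = - r ->
         exists z, col_mx s t = W *m z /\ B1' *m z = - r'),
      (forall z, B1' *m z = - r' ->
         exists (s : 'cV[R]_m.+1) (t : 'cV[R]_n.+1),
           [/\ W *m z = col_mx s t, s^T *m u1 = 0, t^T *m v1 = 0
             & Pi *m B *m Pi *m (W *m z) = - r]),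
      (forall w0 z0 j, w0 = W *m z0 -> (1 <= j <= m + n)%N ->
         (forall z, minres_iterate B1' r' z0 j z ->
                    minres_iterate B1 r w0 j (W *m z)) /\
         (forall w, minres_iterate B1 r w0 j w ->
                    exists z, minres_iterate B1' r' z0 j z /\ w = W *m z))
    & (forall w0 z0 j w z, w0 = W *m z0 -> (j <= m + n)%N ->
         minres_iterate B1 r w0 j w -> minres_iterate B1' r' z0 j z ->
         vnorm (B1 *m w + r) = vnorm (B1' *m z + r'))].

Proof.
move=> u1 v1 B W B1' B1 r r' Pi.
have [uu Pu uP PP uPs] := orth_split hP1.
have [vv Qv vQ QQ vQs] := orth_split hQ1.
have WT : W^T = block_mx P1^T 0 0 Q1^T by rewrite /W /Wmat tr_block_mx !trmx0.
have hWW : W^T *m W = 1%:M.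
  rewrite WT /W /Wmat mulmx_block !mulmx0 !mul0mx !addr0 !add0r PP QQ.
  by rewrite -scalar_mx_block.
have hPi : W *m W^T = Pi.
  rewrite WT /W /Wmat mulmx_block !mulmx0 !mul0mx !addr0 !add0r /Pi /Proj.
  by rewrite -uPs -vQs /u1 /v1 ![_ + P1 *m _]addrC ![_ + Q1 *m _]addrC !addrK.
have hBW : B1 *m W = W *m B1' by rewrite /B1 -mulmxA hWW mulmx1.
have hPiB : Pi *m B *m Pi = B1 by rewrite -hPi /B1 /B1' !mulmxA.
case: htrip => _ cc dd Hd Hc.
have ur : u1^T *m (A *m v1 - theta *: u1) = 0.
  rewrite mulmxBr -scalemxAr uu /u1 /v1 trmx_mul.
  have -> : c^T *m U^T *m (A *m (V *m d)) = c^T *m (U^T *m A *m V *m d) by rewrite !mulmxA.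
  by rewrite Hd -scalemxAr cc subrr.
have vr : v1^T *m (A^T *m u1 - theta *: v1) = 0.
  rewrite mulmxBr -scalemxAr vv /u1 /v1 trmx_mul.
  have -> : d^T *m V^T *m (A^T *m (U *m c)) = d^T *m ((U^T *m A *m V)^T *m c).
    by rewrite !trmx_mul trmxK !mulmxA.
  by rewrite Hc -scalemxAr dd subrr.
have hr : r = W *m r'.
  rewrite /r' mulmxA hPi /r /resid /Pi /Proj mul_block_col !mul0mx addr0 add0r.
  by rewrite !perp_fix.
split => //.
- move=> s t su tv; rewrite hPiB => e.
  have ew : col_mx s t = W *m (W^T *m col_mx s t).
    rewrite mulmxA hPi /Pi /Proj mul_block_col !mul0mx addr0 add0r.
    by rewrite !perp_fix // perp_T.
  exists (W^T *m col_mx s t); split => //.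
  rewrite /r' -mulmxN -e {2}ew (mulmxA B1) hBW -!mulmxA.
  by rewrite [W^T *m (W *m _)]mulmxA hWW mul1mx.
- move=> z e.
  exists (P1 *m usubmx z), (Q1 *m dsubmx z); split.
  + by rewrite -{1}(vsubmxK z) /W /Wmat mul_block_col !mul0mx addr0 add0r.
  + by rewrite trmx_mul -mulmxA Pu mulmx0.
  + by rewrite trmx_mul -mulmxA Qv mulmx0.
  + by rewrite hPiB mulmxA hBW -mulmxA e mulmxN -hr.
- move=> w0 z0 j -> _; split.
  + by move=> z; apply: minres_fwd.
  + by move=> w; apply: minres_bwd.
- move=> w0 z0 j w z -> _; exact: minres_eq.
Qed.
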